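(* Let $\Gamma$ be a finite set of assumptions of the form $\{b_1q_1\overline{b_1'}=0,\dots,b_mq_m\overline{b_m'}=0\}\cup\{c_1\le c_1',\dots,c_n\le c_n'\}$ with $q_i\in\Sigma$ and all $b_i,b_i',c_j,c_j'$ Boolean expressions. Then for every KAT expression $e$, every atom $\alpha\in\mathsf{At}$ and every $p\in\Sigma$, $$\mathsf{D}_{\alpha p}(\mathsf{GS}^\Gamma(e))=\mathsf{GS}^\Gamma(\Delta^\Gamma_{\alpha p}(e)).$$
   Context: Let $\Sigma$ be a finite nonempty set of action symbols and $T=\{t_1,\dots,t_l\}$ a finite nonempty set of test symbols. Boolean expressions: $b::=0\mid 1\mid t\mid \overline{b}\mid b_1+b_2\mid b_1 b_2$; KAT expressions (syntactic terms): $e::=p\in\Sigma\mid b\mid e_1+e_2\mid e_1e_2\mid e^*$. $\mathsf{At}$ is the set of atoms (words $b_1\cdots b_l$ with $b_i\in\{t_i,\overline{t_i}\}$), identified with truth assignments to $T$; $\alpha\le b$ means $b$ is true under $\alpha$. Guarded strings: $\mathsf{GS}=(\mathsf{At}\cdot\Sigma)^*\cdot\mathsf{At}$; for $R\subseteq\mathsf{GS}$, $\mathsf{D}_{\alpha p}(R)=\{y\in\mathsf{GS}\mid\alpha py\in R\}$. The fusion product $xy$ is defined only when the last atom of $x$ equals the first atom of $y$, and is the concatenation with one copy of that atom omitted; $X\diamond Y=\{xy\mid x\in X,y\in Y,xy\text{ defined}\}$, $X^{n+1}=X\diamond X^n$. $\mathsf{At}^\Gamma=\{\alpha\in\mathsf{At}\mid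 \alpha\le c\Rightarrow\alpha\le c'\text{ for all }(c\le c')\in\Gamma\}$. Guarded strings modulo $\Gamma$: $\mathsf{GS}^\Gamma(p)=\{\alpha p\beta\mid\alpha,\beta\in\mathsf{At}^\Gamma\text{ and for every assumption }bp\overline{b'}=0\text{ in }\Gamma\text{ (with this same }p),\ \alpha\le b\Rightarrow\beta\le b'\}$; $\mathsf{GS}^\Gamma(b)=\{\alpha\in\mathsf{At}^\Gamma\mid\alpha\le b\}$; $\mathsf{GS}^\Gamma(e_1+e_2)=\mathsf{GS}^\Gamma(e_1)\cup\mathsf{GS}^\Gamma(e_2)$; $\mathsf{GS}^\Gamma(e_1e_2)=\mathsf{GS}^\Gamma(e_1)\diamond\mathsf{GS}^\Gamma(e_2)$; $\mathsf{GS}^\Gamma(e^* )=\bigcup_{n\ge0}\mathsf{GS}^\Gamma(e)^n$ with $X^0=\mathsf{At}^\Gamma$; for a set $E$, $\mathsf{GS}^\Gamma(E)=\bigcup_{e\in E}\mathsf{GS}^\Gamma(e)$. $\mathsf{E}_\alpha(p)=0$; $\mathsf{E}_\alpha(b)=1$ iff $\alpha\le b$; $\mathsf{E}_\alpha(e_1+e_2)=\max(\mathsf{E}_\alpha(e_1),\mathsf{E}_\alpha(e_2))$; $\mathsf{E}_\alpha(e_1e_2)=\mathsf{E}_\alpha(e_1)\mathsf{E}_\alpha(e_2)$; $\mathsf{E}_\alpha(e^* )=1$. For a set $S$ of expressions: $S\cdot e=\{e'e\mid e'\in S\}$ if $e$ is neither the constant $0$ nor $1$, $S\cdot0=\emptyset$,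 $S\cdot1=S$. Partial derivatives modulo $\Gamma$: if $\alpha\notin\mathsf{At}^\Gamma$ then $\Delta^\Gamma_{\alpha p}(e)=\emptyset$ for all $e$. If $\alpha\in\mathsf{At}^\Gamma$: $\Delta^\Gamma_{\alpha p}(p')=\{\prod\{b'\mid (bp\overline{b'}=0)\in\Gamma,\ \alpha\le b\}\}$ (a singleton containing the conjunction of those $b'$, which is the constant $1$ if there are none) if $p'=p$, and $\emptyset$ if $p'\ne p$; $\Delta^\Gamma_{\alpha p}(b)=\emptyset$; $\Delta^\Gamma_{\alpha p}(e_1+e_2)=\Delta^\Gamma_{\alpha p}(e_1)\cup\Delta^\Gamma_{\alpha p}(e_2)$; $\Delta^\Gamma_{\alpha p}(e_1e_2)=\Delta^\Gamma_{\alpha p}(e_1)\cdot e_2$ if $\mathsf{E}_\alpha(e_1)=0$, and $\Delta^\Gamma_{\alpha p}(e_1)\cdot e_2\cup\Delta^\Gamma_{\alpha p}(e_2)$ if $\mathsf{E}_\alpha(e_1)=1$; $\Delta^\Gamma_{\alpha p}(e^* )=\Delta^\Gamma_{\alpha p}(e)\cdot e^*$. *)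

(* Defs.v *)
From Stdlib Require List.
From mathcomp Require Import all_boot.
Set Implicit Arguments.
Unset Strict Implicit.
Unset Printing Implicit Defensive.

Section KAT.
Variables (Sigma Tst : finType).

Inductive bexp : Type :=
| BZero | BOne | BTest of Tst | BNeg of bexp
| BPlus of bexp & bexp | BAnd of bexp & bexp.

Inductive kexp : Type :=
| KAct of Sigma | KTest of bexp
| KPlus of kexp & kexp | KSeq of kexp & kexp | KStar of kexp.

Definition atom := {ffun Tst -> bool}.

(* alpha <= b : b is true under alpha *)
Fixpoint beval (a : atom) (b : bexp) : bool :=
  match b with
  | BZero => false | BOne => true | BTest t => a t
  | BNeg b => ~~ beval a b
  | BPlus b1 b2 => beval a b1 || beval a b2
  | BAnd b1 b2 => beval a b1 && beval a b2
  end.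

(* Guarded string alpha0 p1 alpha1 ... pn alphan, represented as
   (alpha0, [:: (p1, alpha1); ...; (pn, alphan)]). *)
Definition gstring := (atom * seq (Sigma * atom))%type.
Definition gset := gstring -> Prop.

Definition last_atom (x : gstring) : atom := last x.1 (map snd x.2).

Definition Dgs (a : atom) (p : Sigma) (R : gset) : gset :=
  fun y => R (a, (p, y.1) :: y.2).

Definition fus (X Y : gset) : gset :=
  fun z => exists x y, X x /\ Y y /\ last_atom x = y.1 /\ z = (x.1, x.2 ++ y.2).

Record hyps := Hyps {
  heqs : seq (bexp * Sigma * bexp);   (* (b, q, b') stands for b q ~b' = 0 *)
  hles : seq (bexp * bexp)            (* (c, c') stands for c <= c' *)
}.

Variable G : hyps.

Definition atG (a : atom) : bool :=
  all (fun cc => beval a cc.1 ==> beval a cc.2) (hles G).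

Definition atGs : gset := fun x => atG x.1 /\ x.2 = [::].

Fixpoint gpow (X : gset) (n : nat) : gset :=
  match n with 0 => atGs | n.+1 => fus X (gpow X n) end.

Fixpoint GSG (e : kexp) : gset :=
  match e with
  | KAct p => fun x =>
      exists a b, x = (a, [:: (p, b)]) /\ atG a /\ atG b /\
        (forall bb, List.In bb (heqs G) -> bb.1.2 = p -> beval a bb.1.1 -> beval b bb.2)
  | KTest b => fun x => atG x.1 /\ beval x.1 b /\ x.2 = [::]
  | KPlus e1 e2 => fun x => GSG e1 x \/ GSG e2 x
  | KSeq e1 e2 => fus (GSG e1) (GSG e2)
  | KStar e => fun x => exists n, gpow (GSG e) n x
  end.

Definition GSGset (E : seq kexp) : gset := fun x => exists2 e, List.In e E & GSG e x.

Fixpoint Eps (a : atom) (e : kexp) : bool :=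
  match e with
  | KAct _ => false
  | KTest b => beval a b
  | KPlus e1 e2 => Eps a e1 || Eps a e2
  | KSeq e1 e2 => Eps a e1 && Eps a e2
  | KStar _ => true
  end.

Definition dotk (S : seq kexp) (e : kexp) : seq kexp :=
  match e with
  | KTest BZero => [::]
  | KTest BOne => S
  | _ => map (fun e' => KSeq e' e) S
  end.

Fixpoint bprod (l : seq bexp) : bexp :=
  match l with
  | [::] => BOne
  | [:: b] => b
  | b :: l' => BAnd b (bprod l')
  end.

Fixpoint DeltaG' (a : atom) (p : Sigma) (e : kexp) : seq kexp :=
  match e with
  | KAct p' =>
      if p' == p then
        [:: KTest (bprod [seq bb.2 | bb <- heqs G & (bb.1.2 == p) && beval a bb.1.1])]
      else [::]
  | KTest _ => [::]
  | KPlus e1 e2 => DeltaG' a p e1 ++ DeltaG' a p e2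
  | KSeq e1 e2 =>
      if Eps a e1 then dotk (DeltaG' a p e1) e2 ++ DeltaG' a p e2
      else dotk (DeltaG' a p e1) e2
  | KStar e1 => dotk (DeltaG' a p e1) (KStar e1)
  end.

Definition DeltaG (a : atom) (p : Sigma) (e : kexp) : seq kexp :=
  if atG a then DeltaG' a p e else [::].

End KAT.

(* Main.v *)
Require Import Defs.
From mathcomp Require Import all_boot.
From Stdlib Require Import Setoid.

Section P.
Variables (Sigma Tst : finType) (G : hyps Sigma Tst).
Set Implicit Arguments.
Implicit Types (e : kexp Sigma Tst) (a : atom Tst) (x y : gstring Sigma Tst) (p : Sigma).

Lemma first_atG e x : GSG G e x -> atG G x.1.
Proof.
elim: e x => [q|b|e1 IH1 e2 IH2|e1 IH1 e2 IH2|e1 IH1] x /=.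
- by move=> [a' [b [-> [Ha _]]]].
- by case.
- by case; [apply IH1|apply IH2].
- by move=> [x1 [z [H1 [_ [_ ->]]]]] /=; exact: IH1 H1.
- move=> [n]; case: n => [|n] /=; first by case.
  by move=> [x1 [z [H1 [_ [_ ->]]]]] /=; exact: IH1 H1.
Qed.

Lemma last_fus x z : last_atom x = z.1 -> last_atom (x.1, x.2 ++ z.2) = last_atom z.
Proof. by rewrite /last_atom /= map_cat last_cat => ->. Qed.

Lemma gpow_last (X : gset Sigma Tst) n x :
  (forall x, X x -> atG G (last_atom x)) -> gpow G X n x -> atG G (last_atom x).
Proof.
move=> HX; elim: n x => [|n IH] x /=.
- by case: x => x1 x2 [H /= ->].
- move=> [x1 [z [H1 [H2 [H3 ->]]]]]; rewrite last_fus //; exact: IH.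
Qed.

Lemma last_atG e x : GSG G e x -> atG G (last_atom x).
Proof.
elim: e x => [q|b|e1 IH1 e2 IH2|e1 IH1 e2 IH2|e1 IH1] x /=.
- by move=> [a' [b [-> [_ [Hb _]]]]].
- by case: x => x1 x2 [H [_ /= ->]].
- by case; [apply IH1|apply IH2].
- move=> [x1 [z [H1 [H2 [H3 ->]]]]]; rewrite last_fus //; exact: IH2.
- move=> [n Hn]; apply: (@gpow_last (GSG G e1) n x IH1 Hn).
Qed.

Lemma nil_GSG e a : GSG G e (a, [::]) <-> atG G a /\ Eps a e.
Proof.
elim: e a => [q|b|e1 IH1 e2 IH2|e1 IH1 e2 IH2|e1 IH1] a /=.
- split; last by case.
  by move=> [a' [b [E _]]]; case: E.
- by split; [case=> H [H' _]|case=> H H'].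
- rewrite IH1 IH2; split.
  + by case=> [[H1 H2]|[H1 H2]]; split => //; apply/orP; [left|right].
  + by case=> H /orP [H'|H']; [left|right].
- split.
  + move=> [[x1 x2] [[z1 z2] [H1 [H2 [H3 E]]]]].
    case: x2 H1 H3 E => [|? ?] H1 H3 /= E; last by case: E.
    case: z2 H2 H3 E => [|? ?] H2 H3 E; last by case: E.
    case: E => Ex; rewrite -Ex in H1 H3; rewrite /last_atom /= in H3.
    rewrite -H3 in H2.
    move/IH1: H1 => [Ha H1]; move/IH2: H2 => [_ H2]; split => //; exact/andP.
  + move=> [Ha /andP [H1 H2]]; exists (a, [::]), (a, [::]).
    split; first exact/IH1. split; first exact/IH2. by [].
- split; last by move=> [Ha _]; exists 0.
  move=> H; split => //; exact: (@first_atG (KStar e1) _ H).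
Qed.

Lemma fus_cons (X Y : gset Sigma Tst) a p (y1 : atom Tst) (y2 : seq (Sigma * atom Tst)) :
  fus X Y (a, (p, y1) :: y2) <->
  (X (a, [::]) /\ Y (a, (p, y1) :: y2)) \/ fus (Dgs a p X) Y (y1, y2).
Proof.
split.
- move=> [[x1 x2] [[z1 z2] [Hx [Hz [Hl E]]]]].
  case: x2 Hx Hl E => [|[q c] x2] Hx Hl /= E.
  + case: E => Ea Ez; subst.
    rewrite /last_atom /= in Hl; subst. by left.
  + case: E => Ea Ep Ec Ey; subst.
    right; exists (c, x2), (z1, z2); split; first exact Hx.
    split; first exact Hz. split; first exact Hl. by [].
- case.
  + move=> [Hx Hy]; exists (a, [::]), (a, (p, y1) :: y2).
    split; first exact Hx. split; first exact Hy. by [].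
  + move=> [[x1 x2] [[z1 z2] [Hx [Hz [Hl E]]]]].
    move: E => /= [-> ->].
    exists (a, (p, x1) :: x2), (z1, z2).
    split; first exact Hx. split; first exact Hz. split; first exact Hl. by [].
Qed.

Lemma fus_ext (X X' Y : gset Sigma Tst) z :
  (forall x, X x <-> X' x) -> (fus X Y z <-> fus X' Y z).
Proof.
move=> H; split; move=> [x [w [Hx Hw]]]; exists x, w; split => //; exact/H.
Qed.

Lemma GSGset_cat S1 S2 y :
  GSGset G (S1 ++ S2) y <-> GSGset G S1 y \/ GSGset G S2 y.
Proof.
split.
- move=> [e' /List.in_app_iff [H|H] He']; [left|right]; by exists e'.
- case=> [[e' H He']|[e' H He']]; exists e' => //; apply/List.in_app_iff; by [left|right].
Qed.

Lemma GSGset_map S e y :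
  GSGset G (map (fun e' => KSeq e' e) S) y <-> fus (GSGset G S) (GSG G e) y.
Proof.
split.
- move=> [e0 /List.in_map_iff [e' [<- He']] /= [x [z [Hx Hz]]]].
  exists x, z; split; first by exists e'. exact Hz.
- move=> [x [z [[e' He' Hx] Hz]]]; exists (KSeq e' e).
  + exact: (List.in_map (fun e' => KSeq e' e)).
  + by exists x, z.
Qed.

Lemma GSGset_dotk S e y :
  GSGset G (dotk S e) y <-> fus (GSGset G S) (GSG G e) y.
Proof.
case: e => [q|b|e1 e2|e1 e2|e1]; try exact: GSGset_map.
case: b => [||t|b|b1 b2|b1 b2]; try exact: GSGset_map.
- split; first by case.
  by move=> [x [z [_ [[_ [H _]] _]]]].
- split.
  + move=> Hy; exists y, (last_atom y, [::]).
    split; first exact Hy.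
    split.
    * split; last by [].
      move: Hy => [e' _ He']; exact: last_atG He'.
    * split; first by [].
      by case: y {Hy} => y1 y2 /=; rewrite cats0.
  + move=> [[x1 x2] [z [Hx [[_ [_ Hz2]] [Hl ->]]]]].
    by rewrite /= Hz2 cats0.
Qed.

Lemma bprod_eval c (l : seq (bexp Tst)) : beval c (bprod l) = all (beval c) l.
Proof.
elim: l => [|b l IH] //.
case: l IH => [|b' l] IH; first by rewrite /= andbT.
by rewrite [bprod _]/= [beval _ _]/= IH.
Qed.

Lemma all_heqs c a p (l : seq (bexp Tst * Sigma * bexp Tst)) :
  all (beval c) [seq bb.2 | bb <- l & (bb.1.2 == p) && beval a bb.1.1] <->
  (forall bb, List.In bb l -> bb.1.2 = p -> beval a bb.1.1 -> beval c bb.2).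
Proof.
elim: l => [|bb l IH] /=; first by split.
case: ifP => [/andP [/eqP Hp Ha]|Hn] /=.
- split.
  + move=> /andP [Hc /IH H] bb' [<-|Hin] //; exact: H.
  + move=> H; apply/andP; split; first by apply: H; [left| |].
    apply/IH => bb' Hin; apply: H; by right.
- split.
  + move=> /IH H bb' [<- Hp Ha|Hin]; last exact: H.
    by move: Hn; rewrite Hp eqxx Ha.
  + move=> H; apply/IH => bb' Hin; apply: H; by right.
Qed.

Lemma star_lemma (X : gset Sigma Tst) a p (y1 : atom Tst) (y2 : seq (Sigma * atom Tst)) :
  (exists n, gpow G X n (a, (p, y1) :: y2)) <->
  fus (Dgs a p X) (fun x => exists n, gpow G X n x) (y1, y2).
Proof.
split.
- move=> [n]; elim: n => [|n IH] /=; first by case.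
  move/fus_cons => [[_ H]|[x [z [Hx [Hz Hr]]]]]; first exact: IH.
  exists x, z; split => //; split => //; by exists n.
- move=> [x [z [Hx [[n Hz] Hr]]]]; exists n.+1 => /=.
  apply/fus_cons; right; by exists x, z.
Qed.

Lemma main e a p y : atG G a ->
  (Dgs a p (GSG G e) y <-> GSGset G (DeltaG' G a p e) y).
Proof.
move=> Ha; case: y => y1 y2; rewrite /Dgs /=.
elim: e y1 y2 => [q|b|e1 IH1 e2 IH2|e1 IH1 e2 IH2|e1 IH1] y1 y2 /=.
- case: eqP => [->|Hne].
  + split.
    * move=> [a' [b [E [_ [Hb H]]]]].
      case: E => Ea Ey1 Ey2; subst.
      eexists; first by left.
      rewrite /=; split => //; split => //; rewrite bprod_eval; exact/all_heqs.
    * move=> [e0 [<-|[]] /= [Hy1 [Hb ->]]].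
      exists a, y1; split => //; split => //; split => //.
      rewrite bprod_eval in Hb; exact/all_heqs.
  + split; last by case.
    move=> [a' [b [E _]]].
    have Epq : p = q by case: E.
    by case: (Hne (esym Epq)).
- by split; [case=> _ [_] | case].
- by rewrite GSGset_cat -IH1 -IH2.
- have H1 : forall x, Dgs a p (GSG G e1) x <-> GSGset G (DeltaG' G a p e1) x.
    by case=> ? ?; exact: IH1.
  rewrite fus_cons nil_GSG.
  case E: (Eps a e1).
  + rewrite GSGset_cat GSGset_dotk -(@fus_ext _ _ _ _ H1) -IH2.
    split.
    * by case=> [[_ H]|H]; [right|left].
    * by case=> [H|H]; [right|left].
  + rewrite GSGset_dotk -(@fus_ext _ _ _ _ H1).
    split; last by right.
    by case=> [[[_ F] _]|H].
- have H1 : forall x, Dgs a p (GSG G e1) x <-> GSGset G (DeltaG' G a p e1) x.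
    by case=> ? ?; exact: IH1.
  rewrite GSGset_map -(@fus_ext _ _ _ _ H1).
  exact: star_lemma.
Qed.

End P.

Theorem proposition7 (Sigma Tst : finType) (HS : 0 < #|Sigma|) (HT : 0 < #|Tst|)
  (G : hyps Sigma Tst) (e : kexp Sigma Tst) (a : atom Tst) (p : Sigma) :
  forall y : gstring Sigma Tst,
    Dgs a p (GSG G e) y <-> GSGset G (DeltaG G a p e) y.
Proof.
move=> y; rewrite /DeltaG; case Ha: (atG G a).
- exact: main.
- split; last by case.
  move=> H; have := @first_atG _ _ G e _ H; by rewrite /= Ha.
Qed.
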